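(* Let $U$ be any finite set in a commutative group $G$ and $1<p<\infty$. Then \[ \beta_p(U)=\gamma_p(1_U),\qquad \beta'(U)=\gamma'(1_U),\qquad \beta''(U)=\gamma''(1_U). \]
   Context: Set functionals (with $A,B$ ranging over nonempty finite subsets of $G$): $\beta_p(U)=\inf_{A,B}\frac{|A+B+U|}{|A|^{1/p}|B|^{1-1/p}}$; $\beta'(U)=\inf_{A,B,|A|=|B|}\frac{|A+B+U|}{\sqrt{|A||B|}}$; $\beta''(U)=\inf_A\frac{|A+A+U|}{|A|}$. Functional versions: for nonnegative functions $f,g$ on $G$, the max-convolution is $(f\star g)(x)=\max_t f(t)g(x-t)$. For $t>0$ the level set of $f$ is $\{x: f(x)\ge t\}$ and its distribution function is $F(t)=|\{x:f(x)\ge t\}|$; $f\sim g$ (identically distributed) means their distribution functions coincide. For nonnegative $f\in\ell^1(G)$ and $q$ with $1/p+1/q=1$, with $g,h$ ranging over nonzero nonnegative functions in $\ell^1(G)$: $\gamma_p(f)=\inf_{g,h}\frac{\|f\star g\star h\|_1}{\|g\|_p\|h\|_q}$; $\gamma'(f)=\inf_{g\sim h}\frac{\|f\star g\star h\|_1}{\|g\|_2\|h\|_2}$; $\gamma''(f)=\inf_g\frac{\|f\star g\star g\|_1}{\|g\|_2^2}$. $1_U$ is the indicator function of $U$. *)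

(* Defs.v *)
From HB Require Import structures.
From mathcomp Require Import all_boot all_order all_algebra.
From mathcomp Require Import finmap.
From mathcomp Require Import all_classical all_reals.
From mathcomp Require Import ereal esum exp.
Set Implicit Arguments. Unset Strict Implicit. Unset Printing Implicit Defensive.
Import Order.TTheory GRing.Theory Num.Theory.
Local Open Scope ring_scope.
Local Open Scope classical_set_scope.
Local Open Scope fset_scope.

Definition sumset3 (G : zmodType) (A B U : {fset G}) : {fset G} :=
  [fset (x + u)%R | x in [fset (a + b)%R | a in A, b in B], u in U].

Definition beta_p (R : realType) (G : zmodType) (p : R) (U : {fset G}) : \bar R :=
  ereal_inf [set r | exists A B : {fset G}, A != fset0 /\ B != fset0 /\
     r = ((#|` sumset3 A B U|%:R : R) /
          (powR (#|` A|%:R) p^-1 * powR (#|` B|%:R) (1 - p^-1)))%:E].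

Definition beta' (R : realType) (G : zmodType) (U : {fset G}) : \bar R :=
  ereal_inf [set r | exists A B : {fset G}, A != fset0 /\ B != fset0 /\
     #|` A| = #|` B| /\
     r = ((#|` sumset3 A B U|%:R : R) / Num.sqrt (#|` A|%:R * #|` B|%:R))%:E].

Definition beta'' (R : realType) (G : zmodType) (U : {fset G}) : \bar R :=
  ereal_inf [set r | exists A : {fset G}, A != fset0 /\
     r = ((#|` sumset3 A A U|%:R : R) / #|` A|%:R)%:E].

(* max-convolution (f * g)(x) = max_t f(t) g(x - t); for nonnegative l^1
   functions the supremum is attained, so sup = max. *)
Definition maxconv (R : realType) (G : zmodType) (f g : G -> R) : G -> R :=
  fun x => sup [set f t * g (x - t) | t in [set: G]].

Definition admissible (R : realType) (G : zmodType) (g : G -> R) : Prop :=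
  (forall x, 0 <= g x) /\ (exists x, g x != 0) /\
  (\esum_(x in [set: G]) (g x)%:E < +oo)%E.

Definition l1norm (R : realType) (G : zmodType) (F : G -> R) : \bar R :=
  \esum_(x in [set: G]) (F x)%:E.

(* l^p norm of a nonnegative l^1 function (finite, since l^1 c l^p for p >= 1) *)
Definition lpnorm (R : realType) (G : zmodType) (p : R) (g : G -> R) : R :=
  powR (fine (\esum_(x in [set: G]) (powR (g x) p)%:E)) p^-1.

Definition ident_distr (R : realType) (G : zmodType) (g h : G -> R) : Prop :=
  forall t : R, 0 < t -> ([set x | t <= g x] #= [set x | t <= h x])%card.

Definition gamma_p (R : realType) (G : zmodType) (p : R) (f : G -> R) : \bar R :=
  let q := p / (p - 1) in
  ereal_inf [set r | exists g h : G -> R, admissible g /\ admissible h /\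
     r = (l1norm (maxconv (maxconv f g) h) * ((lpnorm p g * lpnorm q h)^-1)%:E)%E].

Definition gamma' (R : realType) (G : zmodType) (f : G -> R) : \bar R :=
  ereal_inf [set r | exists g h : G -> R, admissible g /\ admissible h /\
     ident_distr g h /\
     r = (l1norm (maxconv (maxconv f g) h) * ((lpnorm 2 g * lpnorm 2 h)^-1)%:E)%E].

Definition gamma'' (R : realType) (G : zmodType) (f : G -> R) : \bar R :=
  ereal_inf [set r | exists g : G -> R, admissible g /\
     r = (l1norm (maxconv (maxconv f g) g) * ((lpnorm 2 g ^+ 2)^-1)%:E)%E].

Definition indic (R : realType) (G : zmodType) (U : {fset G}) : G -> R :=
  fun x => if x \in U then 1 else 0.

(* Main.v *)
Require Import Defs.
From HB Require Import structures.
From mathcomp Require Import all_boot all_order all_algebra.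
From mathcomp Require Import finmap.
From mathcomp Require Import all_classical all_reals.
From mathcomp Require Import ereal esum exp hoelder.
From mathcomp Require Import zify ring lra.
Import Order.TTheory GRing.Theory Num.Theory.
Local Open Scope ring_scope.
Section Core.
Variables (R : realType) (G : zmodType) (U : {fset G}).
Local Open Scope fset_scope.
Local Open Scope ring_scope.

Definition Gf (S T : {fset G}) (g h : G -> R) (x : G) : R :=
  \big[Num.max/0]_(u <- U) \big[Num.max/0]_(a <- S) \big[Num.max/0]_(b <- T)
     (if a + b + u == x then g a * h b else 0).

Lemma Gf_ge S T g h x u a b : u \in U -> a \in S -> b \in T -> a + b + u = x ->
  g a * h b <= Gf S T g h x.
Proof.
move=> uU aS bT e; rewrite /Gf.
apply: le_trans (le_bigmax_seq _ _ xpredT _ uU isT).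
apply: le_trans (le_bigmax_seq _ _ xpredT _ aS isT).
apply: le_trans (le_bigmax_seq _ _ xpredT _ bT isT).
by rewrite e eqxx.
Qed.
Arguments Gf_ge {S T g h x u a b}.

Lemma Gf_le S T g h x c : 0 <= c ->
  (forall u a b, u \in U -> a \in S -> b \in T -> a + b + u = x -> g a * h b <= c) ->
  Gf S T g h x <= c.
Proof.
move=> c0 H; rewrite /Gf big_seq_cond; apply: bigmax_le => // u /andP[uU _].
rewrite big_seq_cond; apply: bigmax_le => // a /andP[aS _].
rewrite big_seq_cond; apply: bigmax_le => // b /andP[bT _].
by case: eqP => [e|_]; [exact: H e | exact: c0].
Qed.

Lemma Gf_ge0 S T g h x : 0 <= Gf S T g h x.
Proof. by rewrite /Gf; apply: (big_rec (fun y => 0 <= y)) => // u y _ y0; rewrite le_max y0 orbT. Qed.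

Definition supp (S : {fset G}) (g : G -> R) : {fset G} := [fset a in S | 0 < g a].
Definition shift (p c : R) (g : G -> R) (x : G) : R :=
  powR (Num.max (powR (g x) p - c) 0) p^-1.

Lemma powRK (p y : R) : 0 < p -> 0 <= y -> powR (powR y p^-1) p = y.
Proof. by move=> p0 y0; rewrite -powRrM mulVf ?gt_eqF // powRr1. Qed.
Lemma powRK' (p y : R) : 0 < p -> 0 <= y -> powR (powR y p) p^-1 = y.
Proof. by move=> p0 y0; rewrite -powRrM mulfV ?gt_eqF // powRr1. Qed.

Lemma shift_pow p c g a : 0 < p -> powR (shift p c g a) p = Num.max (powR (g a) p - c) 0.
Proof. by move=> p0; rewrite /shift powRK // le_max lexx orbT. Qed.

Lemma shift_zero p c g a : 0 < p -> 0 <= c -> g a = 0 -> shift p c g a = 0.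
Proof.
move=> p0 c0 ga; rewrite /shift ga powR0 ?gt_eqF // sub0r.
rewrite (_ : Num.max (- c) 0 = 0) ?powR0 ?invr_eq0 ?gt_eqF//.
by apply/max_idPr; rewrite oppr_le0.
Qed.

Lemma shift_ge0 p c g a : 0 <= shift p c g a.
Proof. exact: powR_ge0. Qed.

Lemma mem_supp S g a : (a \in supp S g) = (a \in S) && (0 < g a).
Proof. by rewrite !inE. Qed.

Lemma mem_sumset3 A B x :
  reflect (exists a b u, [/\ a \in A, b \in B, u \in U & x = a + b + u])
          (x \in sumset3 A B U).
Proof.
apply: (iffP idP) => [/imfset2P[y /imfset2P[a aA [b bB ->]] [u uU ->]]|].
  by exists a, b, u.
move=> [a [b [u [aA bB uU ->]]]]; apply/imfset2P; exists (a + b).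
  by apply/imfset2P; exists a => //; exists b.
by exists u.
Qed.

Lemma sumset3_sub A B S T : A `<=` S -> B `<=` T -> sumset3 A B U `<=` sumset3 S T U.
Proof.
move=> /fsubsetP AS /fsubsetP BT; apply/fsubsetP => x /mem_sumset3 [a [b [u [aA bB uU ->]]]].
by apply/mem_sumset3; exists a, b, u; split => //; [apply: AS | apply: BT].
Qed.
Arguments sumset3_sub {A B S T}.

Lemma supp_sub S g : supp S g `<=` S.
Proof. by apply/fsubsetP => a; rewrite mem_supp => /andP[]. Qed.

Lemma sum_indic (X Y : {fset G}) (d : R) : Y `<=` X ->
  \sum_(x <- X) (if x \in Y then d else 0) = d *+ #|` Y|.
Proof.
move=> YX; rewrite -(big_fset_incl _ YX); last by move=> x _ /negbTE ->.
rewrite big_seq (eq_bigr (fun=> d)) => [|x ->//].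
rewrite -big_seq big_const_seq count_predT.
have -> : #|` Y| = size (enum_fset Y) by [].
by elim: (size (enum_fset Y)) => //= n ->; rewrite mulrS.
Qed.
Arguments sum_indic {X Y} d.

Lemma step_pointwise p q S T g h cg ch x :
  0 < p -> 0 < q -> p^-1 + q^-1 = 1 ->
  (forall x, 0 <= g x) -> (forall x, 0 <= h x) -> 0 <= cg -> 0 <= ch ->
  (forall a, a \in supp S g -> cg <= powR (g a) p) ->
  (forall b, b \in supp T h -> ch <= powR (h b) q) ->
  Gf S T (shift p cg g) (shift q ch h) x +
   (if x \in sumset3 (supp S g) (supp T h) U then powR cg p^-1 * powR ch q^-1 else 0)
  <= Gf S T g h x.
Proof.
move=> p0 q0 pq g0 h0 cg0 ch0 Hg Hh.
have gK a : powR (powR (g a) p) p^-1 = g a by rewrite powRK'.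
have hK b : powR (powR (h b) q) q^-1 = h b by rewrite powRK'.
have zg a : a \in S -> a \notin supp S g -> shift p cg g a = 0.
  move=> aS; rewrite mem_supp aS /= => ga; apply: shift_zero => //.
  by apply/eqP; rewrite eq_le g0 andbT leNgt.
have zh b : b \in T -> b \notin supp T h -> shift q ch h b = 0.
  move=> bT; rewrite mem_supp bT /= => hb; apply: shift_zero => //.
  by apply/eqP; rewrite eq_le h0 andbT leNgt.
have key a b : a \in supp S g -> b \in supp T h ->
   shift p cg g a * shift q ch h b + powR cg p^-1 * powR ch q^-1 <= g a * h b.
  move=> aA bB.
  have := hoelder2 (shift_ge0 p cg g a) (powR_ge0 cg p^-1) (shift_ge0 q ch h b)
     (powR_ge0 ch q^-1) p0 q0 pq.
  rewrite !shift_pow // !powRK //.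
  have -> : Num.max (powR (g a) p - cg) 0 + cg = powR (g a) p.
    by rewrite max_l ?subrK // subr_ge0 Hg.
  have -> : Num.max (powR (h b) q - ch) 0 + ch = powR (h b) q.
    by rewrite max_l ?subrK // subr_ge0 Hh.
  by rewrite gK hK.
have d0 : 0 <= powR cg p^-1 * powR ch q^-1 by rewrite mulr_ge0 ?powR_ge0.
case: (boolP (x \in _)) => [/mem_sumset3 [a [b [u [aA bB uU ->]]]] | xn].
  have aS : a \in S by move: aA; rewrite mem_supp => /andP[].
  have bT : b \in T by move: bB; rewrite mem_supp => /andP[].
  have d_le : powR cg p^-1 * powR ch q^-1 <= Gf S T g h (a + b + u).
    apply: le_trans (Gf_ge uU aS bT erefl).
    apply: le_trans (key _ _ aA bB); rewrite lerDr mulr_ge0 //; exact: shift_ge0.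
  rewrite -lerBrDr; apply: Gf_le; first by rewrite subr_ge0.
  move=> u' a' b' uU' aS' bT' e.
  case: (boolP (a' \in supp S g)) => aA'; last by rewrite zg // mul0r subr_ge0.
  case: (boolP (b' \in supp T h)) => bB'; last by rewrite zh // mulr0 subr_ge0.
  rewrite lerBrDr; apply: le_trans (key _ _ aA' bB') _; exact: Gf_ge uU' aS' bT' e.
rewrite addr0; apply: Gf_le; first exact: Gf_ge0.
move=> u' a' b' uU' aS' bT' e.
case: (boolP (a' \in supp S g)) => aA'; last by rewrite zg // mul0r Gf_ge0.
case: (boolP (b' \in supp T h)) => bB'; last by rewrite zh // mulr0 Gf_ge0.
by case/negP: xn; apply/mem_sumset3; exists a', b', u'.
Qed.


Lemma step_sum (p q : R) S T (g h : G -> R) cg ch :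
  0 < p -> 0 < q -> p^-1 + q^-1 = 1 ->
  (forall x, 0 <= g x) -> (forall x, 0 <= h x) -> 0 <= cg -> 0 <= ch ->
  (forall a, a \in supp S g -> cg <= powR (g a) p) ->
  (forall b, b \in supp T h -> ch <= powR (h b) q) ->
  \sum_(x <- sumset3 S T U) Gf S T (shift p cg g) (shift q ch h) x +
    (powR cg p^-1 * powR ch q^-1) *+ #|` sumset3 (supp S g) (supp T h) U|
  <= \sum_(x <- sumset3 S T U) Gf S T g h x.
Proof.
move=> *; rewrite -(sum_indic _ (sumset3_sub (supp_sub S g) (supp_sub T h))) -big_split /=.
by apply: ler_sum => x _; apply: step_pointwise.
Qed.
Arguments step_sum {p q S T g h cg ch}.

Lemma supp_shift (p c : R) S (g : G -> R) : 0 < p -> 0 <= c -> (forall x, 0 <= g x) ->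
  supp S (shift p c g) `<=` supp S g.
Proof.
move=> p0 c0 g0; apply/fsubsetP => a; rewrite !mem_supp => /andP[aS sp]; rewrite aS /=.
by rewrite lt_def g0 andbT; apply/eqP => ga; move: sp; rewrite shift_zero // ltxx.
Qed.
Arguments supp_shift {p c} S {g}.

Lemma shift_at (p c : R) (g : G -> R) a : 0 < p -> powR (g a) p = c -> shift p c g a = 0.
Proof. by move=> p0 e; rewrite /shift e subrr maxxx powR0 // invr_eq0 gt_eqF. Qed.

Lemma supp_shift_lt (p c : R) S (g : G -> R) a : 0 < p -> 0 <= c -> (forall x, 0 <= g x) ->
  a \in supp S g -> powR (g a) p = c -> (#|` supp S (shift p c g)| < #|` supp S g|)%N.
Proof.
move=> p0 c0 g0 aA e.
rewrite (cardfsD1 a (supp S g)) aA add1n ltnS; apply: fsubset_leq_card.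
apply/fsubsetP => y yin; rewrite in_fsetD1 (fsubsetP (supp_shift S p0 c0 g0) y yin) andbT.
by apply: contraTneq yin => ->; rewrite mem_supp shift_at // ltxx andbF.
Qed.
Arguments supp_shift_lt {p c S g a}.

Lemma finite_main (p q : R) S T (Q : (G -> R) -> (G -> R) -> Prop)
    (Phi : (G -> R) -> (G -> R) -> R) :
  0 < p -> 0 < q -> p^-1 + q^-1 = 1 ->
  (forall g h, Q g h -> (forall x, 0 <= g x) -> (forall x, 0 <= h x) ->
     (supp S g = fset0 \/ supp T h = fset0) -> Phi g h <= 0) ->
  (forall g h, Q g h -> (forall x, 0 <= g x) -> (forall x, 0 <= h x) ->
     supp S g != fset0 -> supp T h != fset0 ->
     exists cg, exists ch, [/\ 0 < cg, 0 < ch,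
       (forall a, a \in supp S g -> cg <= powR (g a) p),
       (forall b, b \in supp T h -> ch <= powR (h b) q) &
       [/\ (exists2 a, a \in supp S g & powR (g a) p = cg) \/
         (exists2 b, b \in supp T h & powR (h b) q = ch),
       Q (shift p cg g) (shift q ch h) &
       Phi g h <= Phi (shift p cg g) (shift q ch h) +
          (powR cg p^-1 * powR ch q^-1) *+ #|` sumset3 (supp S g) (supp T h) U|]]) ->
  forall g h, Q g h -> (forall x, 0 <= g x) -> (forall x, 0 <= h x) ->
    Phi g h <= \sum_(x <- sumset3 S T U) Gf S T g h x.
Proof.
move=> p0 q0 pq H0 Hs.
suff H : forall n g h, (#|` supp S g| + #|` supp T h| < n)%N -> Q g h ->
    (forall x, 0 <= g x) -> (forall x, 0 <= h x) ->
    Phi g h <= \sum_(x <- sumset3 S T U) Gf S T g h x.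
  by move=> g h; apply: H (ltnSn _).
elim=> [g h|n IH g h]; first by rewrite ltn0.
move=> Hn HQ g0 h0.
have [E|E] := boolP ((supp S g == fset0) || (supp T h == fset0)).
  apply: le_trans (H0 g h HQ g0 h0 _) _; first by case/orP: E => /eqP; tauto.
  by apply: sumr_ge0 => x _; exact: Gf_ge0.
move: E; rewrite negb_or => /andP[Eg Eh].
have [cg [ch [cg0 ch0 Hg Hh [Hex HQ' HPhi]]]] := Hs g h HQ g0 h0 Eg Eh.
apply: le_trans HPhi _.
apply: le_trans (step_sum p0 q0 pq g0 h0 (ltW cg0) (ltW ch0) Hg Hh).
rewrite lerD2r; apply: IH; [|exact: HQ'|move=> x; exact: shift_ge0|move=> x; exact: shift_ge0].
have sg := fsubset_leq_card (supp_shift S p0 (ltW cg0) g0).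
have sh := fsubset_leq_card (supp_shift T q0 (ltW ch0) h0).
case: Hex => [[a aA e]|[b bB e]].
  have := supp_shift_lt p0 (ltW cg0) g0 aA e; lia.
have := supp_shift_lt q0 (ltW ch0) h0 bB e; lia.
Qed.


Lemma sum_const_fset (Y : {fset G}) (d : R) : \sum_(x <- Y) d = d *+ #|` Y|.
Proof. by rewrite -(sum_indic d (fsubset_refl Y)); apply: eq_big_seq => x ->. Qed.

Lemma seq_argmin (s : seq G) (phi : G -> R) x : x \in s ->
  exists2 a, a \in s & forall b, b \in s -> phi a <= phi b.
Proof.
elim: s x => // y s IH x _.
case: s IH => [|z s] IH.
  exists y; first exact: mem_head.
  by move=> b; rewrite mem_seq1 => /eqP->.
have [a aS Ha] := IH z (mem_head z s).
case: (leP (phi y) (phi a)) => H.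
  exists y; first exact: mem_head.
  by move=> b; rewrite inE => /predU1P [->//|/Ha]; exact: le_trans.
exists a; first by rewrite inE aS orbT.
by move=> b; rewrite inE => /predU1P [->|/Ha //]; exact: ltW.
Qed.

Lemma fset_argmin (phi : G -> R) (A : {fset G}) : A != fset0 ->
  exists2 a, a \in A & forall b, b \in A -> phi a <= phi b.
Proof.
move=> /fset0Pn [x xA]; have xA' : x \in enum_fset A by [].
by have [a aA Ha] := seq_argmin _ phi _ xA'; exists a.
Qed.
Arguments fset_argmin phi {A}.

Definition Nsum (p : R) (S : {fset G}) (g : G -> R) : R := \sum_(a <- S) powR (g a) p.
Definition fpq (p q x y : R) : R := powR x p^-1 * powR y q^-1.

Lemma notsupp_zero S (g : G -> R) a : (forall x, 0 <= g x) -> a \in S -> a \notin supp S g -> g a = 0.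
Proof.
move=> g0 aS; rewrite mem_supp aS /= => ga; apply/eqP; rewrite eq_le g0 andbT leNgt.
exact: ga.
Qed.
Arguments notsupp_zero {S g a}.

Lemma Nsum_supp p S g : 0 < p -> (forall x, 0 <= g x) ->
  Nsum p S g = \sum_(a <- supp S g) powR (g a) p.
Proof.
move=> p0 g0; rewrite /Nsum (big_fset_incl _ (supp_sub S g)) // => a aS an.
by rewrite (notsupp_zero g0 aS an) powR0 // gt_eqF.
Qed.

Lemma Nsum_ge0 p S g : 0 <= Nsum p S g.
Proof. by apply: sumr_ge0 => a _; exact: powR_ge0. Qed.

Lemma Nsum_shift p c S g : 0 < p -> 0 <= c -> (forall x, 0 <= g x) ->
  (forall a, a \in supp S g -> c <= powR (g a) p) ->
  Nsum p S (shift p c g) = Nsum p S g - c *+ #|` supp S g|.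
Proof.
move=> p0 c0 g0 Hc.
have -> : Nsum p S (shift p c g) = \sum_(a <- supp S g) powR (shift p c g a) p.
  rewrite /Nsum (big_fset_incl _ (supp_sub S g)) // => a aS an.
  by rewrite shift_zero ?(notsupp_zero g0 aS an) // powR0 // gt_eqF.
rewrite (Nsum_supp _ _ _ p0 g0) -(sum_const_fset (supp S g) c) -sumrB.
by apply: eq_big_seq => a aA; rewrite shift_pow // max_l // subr_ge0; exact: Hc.
Qed.

Lemma Nsum_ge p S g m : 0 < p -> (forall x, 0 <= g x) ->
  (forall a, a \in supp S g -> m <= powR (g a) p) -> m *+ #|` supp S g| <= Nsum p S g.
Proof.
move=> p0 g0 H; rewrite (Nsum_supp _ _ _ p0 g0) -sum_const_fset.
by rewrite big_seq [X in _ <= X]big_seq; apply: ler_sum => a; exact: H.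
Qed.
Arguments Nsum_ge {p} S {g m}.

Lemma Nsum_empty p S g : 0 < p -> (forall x, 0 <= g x) -> supp S g = fset0 -> Nsum p S g = 0.
Proof. by move=> p0 g0 E; rewrite (Nsum_supp _ _ _ p0 g0) E big_seq_fset0. Qed.

Lemma powR_sum1 (p q x : R) : 0 <= x -> p^-1 + q^-1 = 1 -> powR x p^-1 * powR x q^-1 = x.
Proof. by move=> x0 pq; rewrite -powRD ?pq ?oner_eq0 ?powRr1. Qed.

Lemma fpq_scale p q l x y : 0 <= l -> 0 <= x -> 0 <= y -> p^-1 + q^-1 = 1 ->
  fpq p q (l * x) (l * y) = l * fpq p q x y.
Proof. by move=> l0 x0 y0 pq; rewrite /fpq !powRM // mulrACA powR_sum1. Qed.

Lemma fpq_mul p q x1 y1 x2 y2 : 0 <= x1 -> 0 <= y1 -> 0 <= x2 -> 0 <= y2 ->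
  fpq p q x1 y1 * fpq p q x2 y2 = fpq p q (x1 * x2) (y1 * y2).
Proof. by move=> *; rewrite /fpq !powRM // mulrACA. Qed.

Lemma fpq0l p q y : 0 < p -> fpq p q 0 y = 0.
Proof. by move=> p0; rewrite /fpq powR0 ?mul0r // invr_eq0 gt_eqF. Qed.

Lemma fin_p (p q b : R) S T g h : 0 < p -> 0 < q -> p^-1 + q^-1 = 1 -> 0 <= b ->
  (forall A B : {fset G}, A != fset0 -> B != fset0 ->
     b * fpq p q #|` A|%:R #|` B|%:R <= #|` sumset3 A B U|%:R) ->
  (forall x, 0 <= g x) -> (forall x, 0 <= h x) ->
  b * fpq p q (Nsum p S g) (Nsum q T h) <= \sum_(x <- sumset3 S T U) Gf S T g h x.
Proof.
move=> p0 q0 pq b0 Hb.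
apply: (finite_main p q S T (fun _ _ => True)
  (fun g h => b * fpq p q (Nsum p S g) (Nsum q T h))) => //.
  move=> g' h' _ g0 h0 [E|E].
    by rewrite (Nsum_empty _ _ _ p0 g0 E) fpq0l // mulr0.
  by rewrite (Nsum_empty _ _ _ q0 h0 E) /fpq powR0 ?mulr0 // invr_eq0 gt_eqF.
move=> {}g {}h _ g0 h0 Eg Eh.
have [a0 a0A Ha0] := fset_argmin (fun a => powR (g a) p) Eg.
have [c0 b0B Hb0] := fset_argmin (fun b => powR (h b) q) Eh.
set A := supp S g in Eg a0A Ha0 *; set B := supp T h in Eh b0B Hb0 *.
set m := powR (g a0) p in Ha0 *; set n := powR (h c0) q in Hb0 *.
have NmA := Nsum_ge S p0 g0 Ha0; have MnB := Nsum_ge T q0 h0 Hb0.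
set N := Nsum p S g in NmA *; set M := Nsum q T h in MnB *.
rewrite -mulr_natr in NmA; rewrite -mulr_natr in MnB.
set kA := #|` A|%:R in NmA *; set kB := #|` B|%:R in MnB *.
have kA0 : 0 < kA by rewrite ltr0n cardfs_gt0.
have kB0 : 0 < kB by rewrite ltr0n cardfs_gt0.
have m0 : 0 < m by apply: powR_gt0; move: a0A; rewrite mem_supp => /andP[].
have n0 : 0 < n by apply: powR_gt0; move: b0B; rewrite mem_supp => /andP[].
have N0 : 0 < N by apply: lt_le_trans NmA; rewrite mulr_gt0.
have M0 : 0 < M by apply: lt_le_trans MnB; rewrite mulr_gt0.
set t := Num.min (m * kA / N) (n * kB / M).
have t0 : 0 < t by rewrite lt_min !divr_gt0 ?mulr_gt0.
have tA : t <= m * kA / N by rewrite ge_min lexx.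
have tB : t <= n * kB / M by rewrite ge_min lexx orbT.
have t1 : t <= 1 by apply: le_trans tA _; rewrite ler_pdivrMr // mul1r.
have cgm : t * N / kA <= m by rewrite ler_pdivrMr // -ler_pdivlMr.
have chn : t * M / kB <= n by rewrite ler_pdivrMr // -ler_pdivlMr.
exists (t * N / kA), (t * M / kB); split.
- by rewrite divr_gt0 ?mulr_gt0.
- by rewrite divr_gt0 ?mulr_gt0.
- by move=> a aA; apply: le_trans cgm (Ha0 a aA).
- by move=> b' bB; apply: le_trans chn (Hb0 b' bB).
split => //.
  case: (leP (m * kA / N) (n * kB / M)) => H.
    left; exists a0 => //; rewrite /t min_l //.
    by rewrite -/m; field; rewrite -/kA !gt_eqF.
  right; exists c0 => //; rewrite /t min_r; last exact: ltW.
  by rewrite -/n; field; rewrite -/kB !gt_eqF.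
have cgA : t * N / kA * kA = t * N by rewrite divfK // gt_eqF.
have chB : t * M / kB * kB = t * M by rewrite divfK // gt_eqF.
rewrite (Nsum_shift _ _ _ _ p0 _ g0); last by move=> a aA; apply: le_trans cgm (Ha0 a aA).
  2: by rewrite ltW // divr_gt0 ?mulr_gt0.
rewrite (Nsum_shift _ _ _ _ q0 _ h0); last by move=> b' bB; apply: le_trans chn (Hb0 b' bB).
  2: by rewrite ltW // divr_gt0 ?mulr_gt0.
rewrite -(mulr_natr (t * N / kA)) -(mulr_natr (t * M / kB)) -/kA -/kB -/N -/M cgA chB.
have -> : N - t * N = (1 - t) * N by ring.
have -> : M - t * M = (1 - t) * M by ring.
have Ng : 0 <= N := ltW N0. have Mg : 0 <= M := ltW M0.
have kAg : 0 <= kA := ltW kA0. have kBg : 0 <= kB := ltW kB0. have tg : 0 <= t := ltW t0.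
have hcg : 0 <= t * N / kA by rewrite divr_ge0 ?mulr_ge0.
have hch : 0 <= t * M / kB by rewrite divr_ge0 ?mulr_ge0.
rewrite fpq_scale ?subr_ge0 //.
have HAB := Hb _ _ Eg Eh; rewrite -/kA -/kB in HAB.
set d := powR (t * N / kA) p^-1 * powR (t * M / kB) q^-1.
have d0 : 0 <= d by rewrite mulr_ge0 ?powR_ge0.
have : d * (b * fpq p q kA kB) <= d * #|` sumset3 A B U|%:R by rewrite ler_wpM2l.
rewrite mulr_natr mulrCA.
have -> : d * fpq p q kA kB = t * fpq p q N M.
  by rewrite /d -[_ * powR _ q^-1]/(fpq p q _ _) fpq_mul ?cgA ?chB ?fpq_scale.
have Fp : 0 <= fpq p q N M by rewrite mulr_ge0 ?powR_ge0.
move=> H; apply: le_trans (lerD (lexx _) H).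
by rewrite -mulrDr -mulrDl subrK mul1r.
Qed.


Lemma pq2 : (2:R)^-1 + 2^-1 = 1.
Proof. by field. Qed.

Lemma fin_gg (b : R) S g : 0 <= b ->
  (forall A : {fset G}, A != fset0 -> b * #|` A|%:R <= #|` sumset3 A A U|%:R) ->
  (forall x, 0 <= g x) ->
  b * Nsum 2 S g <= \sum_(x <- sumset3 S S U) Gf S S g g x.
Proof.
move=> b0 Hb g0.
have two : (0:R) < 2 by [].
apply: (finite_main 2 2 S S (fun g h => h = g) (fun g h => b * Nsum 2 S g)) => //.
- exact: pq2.
- move=> g' h' -> g1 _ [E|E]; by rewrite (Nsum_empty _ _ _ two g1 E) mulr0.
move=> {}g h -> {}g0 _ Eg _.
have [a0 a0A Ha0] := fset_argmin (fun a => powR (g a) 2) Eg.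
set m := powR (g a0) 2 in Ha0 *.
have m0 : 0 < m by apply: powR_gt0; move: a0A; rewrite mem_supp => /andP[].
exists m, m; split => //.
split => //; first by left; exists a0.
rewrite (Nsum_shift _ _ _ _ two (ltW m0) g0 Ha0) powR_sum1 ?pq2 ?(ltW m0) //.
have := Hb _ Eg; rewrite -!(mulr_natr m).
set k := #|` sumset3 _ _ U|%:R; set kA := #|` supp S g|%:R.
move=> H; have m1 := ltW m0; nra.
Qed.

Definition lvl (S : {fset G}) (g : G -> R) (t : R) : {fset G} := [fset a in S | t <= g a].

Lemma mem_lvl S g t a : (a \in lvl S g t) = (a \in S) && (t <= g a).
Proof. by rewrite !inE. Qed.

Lemma lvl_sub S g t : 0 < t -> lvl S g t `<=` supp S g.
Proof.
move=> t0; apply/fsubsetP => a; rewrite mem_lvl mem_supp => /andP[-> ta] /=.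
exact: lt_le_trans ta.
Qed.
Arguments lvl_sub S g {t}.

Lemma lvl_supp S g t : 0 < t -> (forall a, a \in supp S g -> t <= g a) ->
  lvl S g t = supp S g.
Proof.
move=> t0 H; apply/eqP; rewrite eqEfsubset lvl_sub //=.
by apply/fsubsetP => a aA; rewrite mem_lvl H // andbT; move: aA; rewrite mem_supp => /andP[].
Qed.

Lemma lvl_lt S g t a0 : 0 < t -> a0 \in supp S g -> g a0 < t ->
  (#|` lvl S g t| < #|` supp S g|)%N.
Proof.
move=> t0 aA gt.
rewrite (cardfsD1 a0 (supp S g)) aA add1n ltnS; apply: fsubset_leq_card.
apply/fsubsetP => y yin; rewrite in_fsetD1 (fsubsetP (lvl_sub S g t0) y yin) andbT.
by apply: contraTneq yin => ->; rewrite mem_lvl leNgt gt andbF.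
Qed.

Lemma powR_le_iff (r x y : R) : 0 < r -> 0 <= x -> 0 <= y ->
  (powR x r <= powR y r) = (x <= y).
Proof.
move=> r0 x0 y0; apply/idP/idP; last by move=> xy; apply: (ge0_ler_powR (ltW r0)) => //; rewrite nnegrE.
by apply: contraTT; rewrite -!ltNge; exact: gt0_ltr_powR.
Qed.
Arguments powR_le_iff {r x y}.

Lemma lvl_shift p c S g t : 0 < p -> 0 < t -> 0 <= c -> (forall x, 0 <= g x) ->
  lvl S (shift p c g) t = lvl S g (powR (powR t p + c) p^-1).
Proof.
move=> p0 t0 c0 g0; apply/fsetP => a; rewrite !mem_lvl; congr (_ && _).
have tp : 0 < powR t p by apply: powR_gt0.
rewrite -(powR_le_iff p0 (ltW t0)) ?powR_ge0 // shift_pow // le_max.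
rewrite [powR t p <= 0]leNgt tp orbF lerBrDr.
rewrite -(powR_le_iff p0) ?powR_ge0 // powRK //.
by rewrite addr_ge0 // powR_ge0.
Qed.

Lemma fin_gh (b : R) S T g h : 0 <= b ->
  (forall A B : {fset G}, A != fset0 -> B != fset0 -> #|` A| = #|` B| ->
     b * #|` A|%:R <= #|` sumset3 A B U|%:R) ->
  (forall x, 0 <= g x) -> (forall x, 0 <= h x) ->
  (forall t, 0 < t -> #|` lvl S g t| = #|` lvl T h t|) ->
  b * Nsum 2 S g <= \sum_(x <- sumset3 S T U) Gf S T g h x.
Proof.
move=> b0 Hb g0 h0 HQ.
have two : (0:R) < 2 by [].
apply: (finite_main 2 2 S T (fun g h => forall t, 0 < t -> #|` lvl S g t| = #|` lvl T h t|)
   (fun g h => b * Nsum 2 S g) two two pq2 _ _ g h HQ g0 h0).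
- move=> {HQ g0 h0}g {}h HQ g0 h0 E.
  suff E' : supp S g = fset0 by rewrite (Nsum_empty _ _ _ two g0 E') mulr0.
  case: E => // E.
  case: (fset_0Vmem (supp S g)) => [//|[a aA]].
  have ga : 0 < g a by move: aA; rewrite mem_supp => /andP[].
  have := HQ _ ga.
  have -> : lvl T h (g a) = fset0.
    by apply/eqP; rewrite -fsubset0 -E; exact: lvl_sub.
  rewrite cardfs0 => /eqP; rewrite cardfs_eq0 => /eqP E2.
  have : a \in lvl S g (g a) by rewrite mem_lvl lexx andbT; move: aA; rewrite mem_supp => /andP[].
  by rewrite E2 inE.
move=> {HQ g0 h0}g {}h HQ g0 h0 Eg Eh.
have [a0 a0A Ha0] := fset_argmin g Eg.
have [c0 c0B Hc0] := fset_argmin h Eh.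
have mg0 : 0 < g a0 by move: a0A; rewrite mem_supp => /andP[].
have mh0 : 0 < h c0 by move: c0B; rewrite mem_supp => /andP[].
have lg t : 0 < t -> t <= g a0 -> lvl S g t = supp S g.
  by move=> t0 tm; apply: lvl_supp => // a aA; apply: le_trans tm (Ha0 a aA).
have lh t : 0 < t -> t <= h c0 -> lvl T h t = supp T h.
  by move=> t0 tm; apply: lvl_supp => // a aA; apply: le_trans tm (Hc0 a aA).
have cardAB : #|` supp S g| = #|` supp T h|.
  have t0 : 0 < Num.min (g a0) (h c0) by rewrite lt_min mg0.
  rewrite -(lg _ t0) ?ge_min ?lexx // -(lh _ t0) ?ge_min ?lexx ?orbT //.
  exact: HQ.
have mgh : g a0 = h c0.
  apply/eqP; rewrite eq_le; apply/andP; split; rewrite leNgt; apply/negP => lt.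
    have := lvl_lt T h _ c0 mg0 c0B lt.
    by rewrite -(HQ _ mg0) (lg _ mg0 (lexx _)) cardAB ltnn.
  have := lvl_lt S g _ a0 mh0 a0A lt.
  by rewrite (HQ _ mh0) (lh _ mh0 (lexx _)) cardAB ltnn.
set c := powR (g a0) 2.
have cpos : 0 < c by apply: powR_gt0.
have Hg : forall a, a \in supp S g -> c <= powR (g a) 2.
  move=> a aA; apply: ge0_ler_powR => //; rewrite ?nnegrE ?g0 //; exact: Ha0.
have Hh : forall a, a \in supp T h -> c <= powR (h a) 2.
  move=> a aA; rewrite /c mgh; apply: ge0_ler_powR => //; rewrite ?nnegrE ?h0 //; exact: Hc0.
exists c, c; split; [exact: cpos|exact: cpos|exact: Hg|exact: Hh|].
split; first by left; exists a0.
  move=> t t0; rewrite !lvl_shift ?(ltW cpos) //; apply: HQ.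
  by apply: powR_gt0; rewrite addr_gt0 // powR_gt0.
rewrite (Nsum_shift _ _ _ _ two (ltW cpos) g0 Hg) powR_sum1 ?pq2 ?(ltW cpos) //.
have := Hb _ _ Eg Eh cardAB; rewrite -!(mulr_natr c).
set k := #|` sumset3 _ _ U|%:R; set kA := #|` supp S g|%:R.
move=> H; have m1 := ltW cpos; nra.
Qed.


Local Open Scope classical_set_scope.

Lemma esum_ge_fset (F : G -> R) (X : {fset G}) :
  ((\sum_(x <- X) F x)%:E <= \esum_(x in [set: G]) (F x)%:E)%E.
Proof.
apply: esum_ge; exists [set` X]; first by split; [exact: finite_fset | exact: subsetT].
by rewrite fsbig_finite ?set_fsetK ?sumEFin //; exact: finite_fset.
Qed.

Lemma esum_le_fset (F : G -> R) (c : R) :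
  (forall X : {fset G}, \sum_(x <- X) F x <= c) ->
  (\esum_(x in [set: G]) (F x)%:E <= c%:E)%E.
Proof.
move=> H; apply: ge_ereal_sup => _ [A [finA _] <-].
by rewrite fsbig_finite // sumEFin lee_fin.
Qed.

Lemma adm_bound (g : G -> R) : admissible g ->
  exists2 K, 0 <= K & forall x, g x <= K.
Proof.
move=> [g0 [_ gfin]].
set E := (\esum_(x in [set: G]) (g x)%:E)%E in gfin.
have E0 : (0 <= E)%E by apply: esum_ge0 => x _; rewrite lee_fin.
have Efin : E \is a fin_num by rewrite ge0_fin_numE.
exists (fine E); first by rewrite fine_ge0.
move=> x; rewrite -lee_fin fineK //.
by have := esum_ge_fset g [fset x]%fset; rewrite big_seq_fset1.
Qed.
Arguments adm_bound {g}.

Lemma maxconv_ge (f g : G -> R) x t K :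
  (forall s, f s * g (x - s) <= K) -> f t * g (x - t) <= maxconv f g x.
Proof.
move=> HK; apply: ub_le_sup; last by exists t.
by exists K => _ [s _ <-].
Qed.
Arguments maxconv_ge {f g x} t {K}.

Lemma maxconv_le (f g : G -> R) x K :
  (forall s, f s * g (x - s) <= K) -> maxconv f g x <= K.
Proof. by move=> HK; apply: ge_sup; [exists (f 0 * g (x - 0)), 0 | move=> _ [s _ <-]]. Qed.
Arguments maxconv_le {f g x K}.

Lemma indic_ge0 (X : {fset G}) x : 0 <= indic R X x.
Proof. by rewrite /indic; case: ifP. Qed.

Lemma indic_le1 (X : {fset G}) x : indic R X x <= 1.
Proof. by rewrite /indic; case: ifP. Qed.

Lemma F_facts (g h : G -> R) x : admissible g -> admissible h ->
  exists2 K, (forall s, maxconv (indic R U) g s * h (x - s) <= K) &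
   [/\ forall s u, u \in U -> g (s - u) <= maxconv (indic R U) g s,
        forall s, 0 <= maxconv (indic R U) g s &
        forall s, 0 <= h s].
Proof.
move=> ag ah.
have [Kg Kg0 HKg] := adm_bound ag; have [Kh Kh0 HKh] := adm_bound ah.
have g0 := ag.1; have h0 := ah.1.
have B1 y s : indic R U s * g (y - s) <= Kg.
  rewrite /indic; case: ifP => _; by rewrite ?mul1r ?mul0r.
have F1le y : maxconv (indic R U) g y <= Kg by apply: maxconv_le.
have F1ge y : 0 <= maxconv (indic R U) g y.
  apply: le_trans (maxconv_ge 0 (B1 y)); by rewrite mulr_ge0 ?indic_ge0.
exists (Kg * Kh); first by move=> s; rewrite ler_pM.
split => // s u uU.
by have := maxconv_ge u (B1 s); rewrite /indic uU mul1r.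
Qed.
Arguments F_facts {g h} x.

Lemma F_ge (g h : G -> R) x u a b : admissible g -> admissible h ->
  u \in U -> a + b + u = x ->
  g a * h b <= maxconv (maxconv (indic R U) g) h x.
Proof.
move=> ag ah uU e.
have [K B2 [H1 H2 H3]] := F_facts x ag ah.
apply: le_trans (maxconv_ge (a + u) B2).
have -> : x - (a + u) = b by rewrite -e (addrAC a b u) [_ - _]addrC addKr.
rewrite ler_wpM2r //.
by have := H1 (a + u) u uU; rewrite addrK.
Qed.
Arguments F_ge {g h x u a b}.

Lemma F_ge0 (g h : G -> R) x : admissible g -> admissible h ->
  0 <= maxconv (maxconv (indic R U) g) h x.
Proof.
move=> ag ah; have [K B2 [H1 H2 H3]] := F_facts x ag ah.
by apply: le_trans (maxconv_ge 0 B2); rewrite mulr_ge0.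
Qed.

Lemma Gf_le_F S T (g h : G -> R) x : admissible g -> admissible h ->
  Gf S T g h x <= maxconv (maxconv (indic R U) g) h x.
Proof.
move=> ag ah; apply: Gf_le; first exact: F_ge0.
move=> u a b uU _ _ e; exact: (F_ge ag ah uU e).
Qed.

Lemma Gf_le_F' S T (g h : G -> R) x : admissible g -> admissible h ->
  Gf T S h g x <= maxconv (maxconv (indic R U) g) h x.
Proof.
move=> ag ah; apply: Gf_le; first exact: F_ge0.
move=> u a b uU _ _ e; rewrite mulrC; apply: (F_ge ag ah uU).
by rewrite -e (addrC a b).
Qed.


Arguments esum_le_fset {F c}.
Arguments esum_ge_fset F X : clear implicits.

Lemma sup_bound (phi : G -> R) (k r l : R) :
  (forall x, 0 <= phi x) -> 0 <= k -> 0 < r ->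
  (forall X : {fset G}, k * powR (\sum_(x <- X) phi x) r <= l) ->
  k * powR (fine (\esum_(x in [set: G]) (phi x)%:E)) r <= l.
Proof.
move=> phi0 k0 r0 H.
have l0 : 0 <= l by have := H fset0; rewrite big_seq_fset0 powR0 ?gt_eqF // mulr0.
case: (eqVneq k 0) => [->|kn0]; first by rewrite mul0r.
have kp : 0 < k by rewrite lt_def kn0.
rewrite mulrC -ler_pdivlMr //.
set c := l / k.
have c0 : 0 <= c by rewrite divr_ge0.
have HX (X : {fset G}) : \sum_(x <- X) phi x <= powR c r^-1.
  have s0 : 0 <= \sum_(x <- X) phi x by apply: sumr_ge0 => x _; exact: phi0.
  rewrite -(powR_le_iff r0 s0 (powR_ge0 _ _)) powRK //.
  by rewrite /c ler_pdivlMr // mulrC; apply: (H X).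
have E := esum_le_fset HX.
have E0 : (0 <= \esum_(x in [set: G]) (phi x)%:E)%E by apply: esum_ge0 => x _; rewrite lee_fin.
have Efin : \esum_(x in [set: G]) (phi x)%:E \is a fin_num.
  by rewrite ge0_fin_numE // (le_lt_trans E) ?ltry.
have H2 : fine (\esum_(x in [set: G]) (phi x)%:E) <= powR c r^-1 by rewrite -lee_fin fineK.
apply: le_trans (_ : powR (powR c r^-1) r <= c); last by rewrite powRK.
by apply: (ge0_ler_powR (ltW r0)) => //; rewrite nnegrE ?fine_ge0 ?powR_ge0.
Qed.

Lemma adm_pow_fin (g : G -> R) p : admissible g -> 1 <= p ->
  (\esum_(x in [set: G]) (powR (g x) p)%:E < +oo)%E.
Proof.
move=> ag p1; have [K K0 HK] := adm_bound ag.
have [g0 [_ gfin]] := ag.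
have E0 : (0 <= \esum_(x in [set: G]) (g x)%:E)%E by apply: esum_ge0 => x _; rewrite lee_fin.
have Efin : \esum_(x in [set: G]) (g x)%:E \is a fin_num by rewrite ge0_fin_numE.
have p0 : 0 < p by apply: lt_le_trans p1.
have H (X : {fset G}) : \sum_(x <- X) powR (g x) p <=
    powR K (p - 1) * fine (\esum_(x in [set: G]) (g x)%:E).
  apply: le_trans (_ : \sum_(x <- X) (powR K (p - 1) * g x) <= _).
    apply: ler_sum => x _; rewrite -(mulr_powRB1 (g0 x) p0) mulrC.
    rewrite ler_wpM2r //; apply: (ge0_ler_powR _) => //; rewrite ?subr_ge0 ?nnegrE //.
  rewrite -mulr_sumr ler_wpM2l ?powR_ge0 //.
  by rewrite -lee_fin fineK // esum_ge_fset.
by apply: le_lt_trans (esum_le_fset H) _; rewrite ltry.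
Qed.
Arguments adm_pow_fin {g p}.

Lemma adm_pow_pos (g : G -> R) p : admissible g -> 1 <= p ->
  0 < fine (\esum_(x in [set: G]) (powR (g x) p)%:E).
Proof.
move=> ag p1; have fin := adm_pow_fin ag p1.
have [g0 [[x0 gx0] _]] := ag.
have E0 : (0 <= \esum_(x in [set: G]) (powR (g x) p)%:E)%E by apply: esum_ge0 => x _; rewrite lee_fin powR_ge0.
have Efin : \esum_(x in [set: G]) (powR (g x) p)%:E \is a fin_num by rewrite ge0_fin_numE.
rewrite -lte_fin fineK //; apply: lt_le_trans (esum_ge_fset _ [fset x0]%fset).
by rewrite big_seq_fset1 lte_fin powR_gt0 // lt_def gx0 g0.
Qed.
Arguments adm_pow_pos {g p}.

Lemma finite_level (g : G -> R) e : admissible g -> 0 < e -> finite_set [set x | e <= g x].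
Proof.
move=> ag e0; have [g0 [_ gfin]] := ag.
have E0 : (0 <= \esum_(x in [set: G]) (g x)%:E)%E by apply: esum_ge0 => x _; rewrite lee_fin.
have Efin : \esum_(x in [set: G]) (g x)%:E \is a fin_num by rewrite ge0_fin_numE.
set K := fine (\esum_(x in [set: G]) (g x)%:E).
have K0 : 0 <= K by rewrite fine_ge0.
apply: contrapT => inf.
have [n Hn] : exists n : nat, K / e < n%:R.
  by exists (Num.Def.archi_bound (K / e)); apply: archi_boundP; rewrite divr_ge0 // ltW.
have [B BA Bn] := infinite_set_fset n inf.
have H1 : e *+ #|` B| <= K.
  apply: le_trans (_ : \sum_(x <- B) g x <= K).
    rewrite -sum_const_fset big_seq [X in _ <= X]big_seq; apply: ler_sum => x xB.
    exact: (BA x xB).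
  by rewrite -lee_fin fineK // esum_ge_fset.
have H2 : K < e *+ #|` B|.
  rewrite -mulr_natr mulrC -ltr_pdivrMr //; apply: lt_le_trans Hn _; by rewrite ler_nat.
by move: (lt_le_trans H2 H1); rewrite ltxx.
Qed.
Arguments finite_level {g e}.

Lemma card_eq_fset_set (A B : set G) : (A #= B)%card -> finite_set A ->
  #|` fset_set A| = #|` fset_set B|.
Proof.
move=> AB [n An].
by rewrite (card_fset_set An) (card_fset_set (card_eq_trans (card_esym AB) An)).
Qed.

Lemma sum_sub_le (A B : {fset G}) (phi : G -> R) : (A `<=` B)%fset -> (forall x, 0 <= phi x) ->
  \sum_(x <- A) phi x <= \sum_(x <- B) phi x.
Proof.
move=> AB phi0.
have -> : \sum_(x <- A) phi x = \sum_(x <- A) (if x \in A then phi x else 0).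
  by apply: eq_big_seq => x ->.
rewrite (big_fset_incl _ AB); last by move=> x _ /negbTE ->.
by apply: ler_sum => x _; case: ifP.
Qed.


Lemma F_sum_le (g h : G -> R) S T : admissible g -> admissible h ->
  ((\sum_(x <- sumset3 S T U) Gf S T g h x)%:E <=
    l1norm (maxconv (maxconv (indic R U) g) h))%E.
Proof.
move=> ag ah; have H := esum_ge_fset (maxconv (maxconv (indic R U) g) h) (sumset3 S T U).
apply: le_trans H; rewrite lee_fin; apply: ler_sum => x _; exact: Gf_le_F.
Qed.

Lemma F_sum_le' (g h : G -> R) S T : admissible g -> admissible h ->
  ((\sum_(x <- sumset3 T S U) Gf T S h g x)%:E <=
    l1norm (maxconv (maxconv (indic R U) g) h))%E.
Proof.
move=> ag ah; have H := esum_ge_fset (maxconv (maxconv (indic R U) g) h) (sumset3 T S U).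
apply: le_trans H; rewrite lee_fin; apply: ler_sum => x _; exact: Gf_le_F'.
Qed.

Lemma l1norm_ge0 (g h : G -> R) : admissible g -> admissible h ->
  (0 <= l1norm (maxconv (maxconv (indic R U) g) h))%E.
Proof. by move=> ag ah; apply: esum_ge0 => x _; rewrite lee_fin; exact: F_ge0. Qed.

Lemma ratio_bound (b : R) (L : \bar R) (D : R) : 0 < D -> (0 <= L)%E ->
  (forall l, L = l%:E -> b * D <= l) -> (b%:E <= L * (D^-1)%:E)%E.
Proof.
move=> D0 L0 H.
have [Lfin|Linf] := boolP (L \is a fin_num).
  rewrite -(fineK Lfin) -EFinM lee_fin ler_pdivlMr //; exact: H (esym (fineK Lfin)).
have -> : L = +oo%E.
  by move: Linf; rewrite ge0_fin_numE // -leNgt leye_eq => /eqP.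
by rewrite gt0_mulye ?leey // lte_fin invr_gt0.
Qed.

Lemma lower_p (p : R) : 1 < p -> (beta_p p U <= gamma_p p (indic R U))%E.
Proof.
move=> p1.
have p0 : 0 < p by apply: lt_trans p1.
set q := p / (p - 1).
have pm1 : 0 < p - 1 by rewrite subr_gt0.
have q0 : 0 < q by rewrite divr_gt0.
have qinv : q^-1 = 1 - p^-1 by rewrite /q invf_div; field; rewrite gt_eqF.
have pq : p^-1 + q^-1 = 1 by rewrite qinv addrC subrK.
have q1 : 1 <= q by rewrite /q ler_pdivlMr // mul1r gerBl.
have den0 (A B : {fset G}) : A != fset0 -> B != fset0 ->
    0 < powR (#|` A|%:R) p^-1 * powR (#|` B|%:R) (1 - p^-1).
  by move=> nA nB; rewrite mulr_gt0 // powR_gt0 // ltr0n cardfs_gt0.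
have Bge0 : (0 <= beta_p p U)%E.
  apply: le_ereal_inf_tmp => _ [A [B [nA [nB ->]]]].
  by rewrite lee_fin divr_ge0 // ltW // den0.
have nz : [fset (0 : G)]%fset != fset0 by apply/fset0Pn; exists 0; rewrite inE.
have Blty : (beta_p p U < +oo)%E.
  apply: le_lt_trans (ltry _); apply: ereal_inf_lbound.
  by exists [fset 0]%fset, [fset 0]%fset; split; [exact: nz|split; [exact: nz|]].
set b := fine (beta_p p U).
have Bb : beta_p p U = b%:E by rewrite fineK // ge0_fin_numE.
have b0 : 0 <= b by rewrite -lee_fin -Bb.
have Hb (A B : {fset G}) : A != fset0 -> B != fset0 ->
    b * fpq p q #|` A|%:R #|` B|%:R <= #|` sumset3 A B U|%:R.
  move=> nA nB.
  have H : (beta_p p U <= ((#|` sumset3 A B U|%:R : R) /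
          (powR (#|` A|%:R) p^-1 * powR (#|` B|%:R) (1 - p^-1)))%:E)%E.
    by apply: ereal_inf_lbound; exists A, B.
  by move: H; rewrite Bb lee_fin ler_pdivlMr ?den0 // /fpq qinv.
rewrite Bb /gamma_p /=; apply: le_ereal_inf_tmp => _ [g [h [ag [ah ->]]]].
have g0 := ag.1; have h0 := ah.1.
apply: ratio_bound; first by rewrite mulr_gt0 // powR_gt0 // adm_pow_pos // ltW.
  exact: l1norm_ge0.
move=> l Ll.
have key (S T : {fset G}) : b * fpq p q (Nsum p S g) (Nsum q T h) <= l.
  rewrite -lee_fin -Ll; apply: le_trans (F_sum_le g h S T ag ah); rewrite lee_fin.
  exact: (fin_p p q b S T g h p0 q0 pq b0 Hb g0 h0).
have pg0 : forall x, 0 <= powR (g x) p by move=> x; exact: powR_ge0.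
have ph0 : forall x, 0 <= powR (h x) q by move=> x; exact: powR_ge0.
have step1 (T : {fset G}) : (b * powR (Nsum q T h) q^-1) * lpnorm p g <= l.
  rewrite /lpnorm.
  apply: (sup_bound (fun x => powR (g x) p) (b * powR (Nsum q T h) q^-1) p^-1 l pg0).
  - by rewrite mulr_ge0 // powR_ge0.
  - by rewrite invr_gt0.
  by move=> X; apply: le_trans (key X T); rewrite /fpq /Nsum mulrAC -mulrA.
rewrite mulrA.
rewrite {2}/lpnorm.
apply: (sup_bound (fun x => powR (h x) q) (b * lpnorm p g) q^-1 l ph0).
- by rewrite mulr_ge0 // powR_ge0.
- by rewrite invr_gt0.
by move=> X; apply: le_trans (step1 X); rewrite [X in X <= _]mulrAC.
Qed.


Lemma esum_pow_ge0 (g : G -> R) (p : R) :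
  0 <= fine (\esum_(x in [set: G]) (powR (g x) p)%:E).
Proof. by apply: fine_ge0; apply: esum_ge0 => x _; rewrite lee_fin powR_ge0. Qed.

Lemma lower_gg : (beta'' R U <= gamma'' (indic R U))%E.
Proof.
have Bge0 : (0 <= beta'' R U)%E.
  apply: le_ereal_inf_tmp => _ [A [nA ->]].
  by rewrite lee_fin divr_ge0.
have nz : [fset (0 : G)]%fset != fset0 by apply/fset0Pn; exists 0; rewrite inE.
have Blty : (beta'' R U < +oo)%E.
  apply: le_lt_trans (ltry _); apply: ereal_inf_lbound.
  by exists [fset 0]%fset; split; [exact: nz|].
set b := fine (beta'' R U).
have Bb : beta'' R U = b%:E by rewrite fineK // ge0_fin_numE.
have b0 : 0 <= b by rewrite -lee_fin -Bb.
have Hb (A : {fset G}) : A != fset0 -> b * #|` A|%:R <= #|` sumset3 A A U|%:R.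
  move=> nA.
  have H : (beta'' R U <= ((#|` sumset3 A A U|%:R : R) / #|` A|%:R)%:E)%E.
    by apply: ereal_inf_lbound; exists A.
  by move: H; rewrite Bb lee_fin ler_pdivlMr // ltr0n cardfs_gt0.
rewrite Bb /gamma''; apply: le_ereal_inf_tmp => _ [g [ag ->]].
have g0 := ag.1.
have two1 : (1:R) <= 2 by rewrite ler1n.
have lp2 : lpnorm 2 g ^+ 2 = fine (\esum_(x in [set: G]) (powR (g x) 2)%:E).
  by rewrite /lpnorm expr2 powR_sum1 ?pq2 // esum_pow_ge0.
apply: ratio_bound.
- by rewrite lp2; exact: adm_pow_pos ag two1.
- exact: l1norm_ge0.
move=> l Ll; rewrite lp2.
have pg0 : forall x, 0 <= powR (g x) 2 by move=> x; exact: powR_ge0.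
rewrite -(powRr1 (esum_pow_ge0 g 2)).
apply: (sup_bound (fun x => powR (g x) 2) b 1 l pg0 b0 ltr01).
move=> X; rewrite powRr1 ?Nsum_ge0 //.
rewrite -lee_fin -Ll; apply: le_trans (F_sum_le g g X X ag ag); rewrite lee_fin.
exact: (fin_gg b X g b0 Hb g0).
Qed.

Lemma key_gh (b l : R) (g h : G -> R) : admissible g -> admissible h -> ident_distr g h ->
  0 <= b ->
  (forall A B : {fset G}, A != fset0 -> B != fset0 -> #|` A| = #|` B| ->
     b * #|` A|%:R <= #|` sumset3 A B U|%:R) ->
  (forall S T : {fset G}, \sum_(x <- sumset3 S T U) Gf S T g h x <= l) ->
  forall X : {fset G}, b * powR (\sum_(x <- X) powR (g x) 2) 1 <= l.
Proof.
move=> ag ah gh b0 Hb HF X.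
have g0 := ag.1; have h0 := ah.1.
have two : (0:R) < 2 by [].
rewrite powRr1; last by apply: sumr_ge0 => x _; exact: powR_ge0.
rewrite -/(Nsum 2 X g).
case: (eqVneq (supp X g) fset0) => [E|E].
  rewrite (Nsum_empty _ _ _ two g0 E) mulr0.
  by apply: le_trans (HF fset0 fset0); apply: sumr_ge0 => x _; exact: Gf_ge0.
have [a0 a0A Ha0] := fset_argmin g E.
set e := g a0.
have e0 : 0 < e by move: a0A; rewrite mem_supp => /andP[].
have fg := finite_level ag e0; have fh := finite_level ah e0.
set S := fset_set [set x | e <= g x]; set T := fset_set [set x | e <= h x].
have memS x : (x \in S) = (e <= g x).
  by rewrite (in_fset_set fg); apply/idP/idP => [/set_mem //|H]; apply: mem_set.
have memT x : (x \in T) = (e <= h x).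
  by rewrite (in_fset_set fh); apply/idP/idP => [/set_mem //|H]; apply: mem_set.
have HQ t : 0 < t -> #|` lvl S g t| = #|` lvl T h t|.
  move=> t0; set t' := Num.max e t.
  have t'0 : 0 < t' by rewrite lt_max e0.
  have -> : lvl S g t = fset_set [set x | t' <= g x].
    apply/fsetP => x; rewrite mem_lvl memS (in_fset_set (finite_level ag t'0)).
    apply/idP/idP => [/andP[H1 H2]|/set_mem]; first by apply: mem_set; rewrite /= ge_max H1.
    by rewrite /= ge_max.
  have -> : lvl T h t = fset_set [set x | t' <= h x].
    apply/fsetP => x; rewrite mem_lvl memT (in_fset_set (finite_level ah t'0)).
    apply/idP/idP => [/andP[H1 H2]|/set_mem]; first by apply: mem_set; rewrite /= ge_max H1.
    by rewrite /= ge_max.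
  exact: card_eq_fset_set (gh t' t'0) (finite_level ag t'0).
apply: le_trans (HF S T).
apply: le_trans (fin_gh b S T g h b0 Hb g0 h0 HQ).
rewrite ler_wpM2l // (Nsum_supp _ _ _ two g0) /Nsum.
apply: sum_sub_le; last by move=> x; exact: powR_ge0.
by apply/fsubsetP => x xA; rewrite memS; exact: Ha0.
Qed.

Lemma lower_gh : (beta' R U <= gamma' (indic R U))%E.
Proof.
have Bge0 : (0 <= beta' R U)%E.
  apply: le_ereal_inf_tmp => _ [A [B [nA [nB [eAB ->]]]]].
  by rewrite lee_fin divr_ge0 // sqrtr_ge0.
have nz : [fset (0 : G)]%fset != fset0 by apply/fset0Pn; exists 0; rewrite inE.
have Blty : (beta' R U < +oo)%E.
  apply: le_lt_trans (ltry _); apply: ereal_inf_lbound.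
  by exists [fset 0]%fset, [fset 0]%fset; split; [exact: nz|split; [exact: nz|split]].
set b := fine (beta' R U).
have Bb : beta' R U = b%:E by rewrite fineK // ge0_fin_numE.
have b0 : 0 <= b by rewrite -lee_fin -Bb.
have Hb (A B : {fset G}) : A != fset0 -> B != fset0 -> #|` A| = #|` B| ->
    b * #|` A|%:R <= #|` sumset3 A B U|%:R.
  move=> nA nB eAB.
  have H : (beta' R U <= ((#|` sumset3 A B U|%:R : R) /
        Num.sqrt (#|` A|%:R * #|` B|%:R))%:E)%E.
    by apply: ereal_inf_lbound; exists A, B.
  move: H; rewrite Bb lee_fin -eAB -expr2 sqrtr_sqr ger0_norm // ler_pdivlMr //.
  by rewrite ltr0n cardfs_gt0.
rewrite Bb /gamma'; apply: le_ereal_inf_tmp => _ [g [h [ag [ah [gh ->]]]]].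
have two1 : (1:R) <= 2 by rewrite ler1n.
apply: ratio_bound.
- by rewrite mulr_gt0 // powR_gt0 // adm_pow_pos.
- exact: l1norm_ge0.
move=> l Ll.
have HF (S T : {fset G}) : \sum_(x <- sumset3 S T U) Gf S T g h x <= l.
  by rewrite -lee_fin -Ll; exact: F_sum_le.
have HF' (S T : {fset G}) : \sum_(x <- sumset3 S T U) Gf S T h g x <= l.
  by rewrite -lee_fin -Ll; exact: (F_sum_le' g h T S ag ah).
have hg : ident_distr h g by move=> t t0; exact: card_esym (gh t t0).
have pg0 : forall x, 0 <= powR (g x) 2 by move=> x; exact: powR_ge0.
have ph0 : forall x, 0 <= powR (h x) 2 by move=> x; exact: powR_ge0.
have Ng := sup_bound (fun x => powR (g x) 2) b 1 l pg0 b0 ltr01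
  (key_gh b l g h ag ah gh b0 Hb HF).
have Nh := sup_bound (fun x => powR (h x) 2) b 1 l ph0 b0 ltr01
  (key_gh b l h g ah ag hg b0 Hb HF').
rewrite powRr1 ?esum_pow_ge0 // in Ng.
rewrite powRr1 ?esum_pow_ge0 // in Nh.
rewrite /lpnorm.
set N := fine (\esum_(x in [set: G]) (powR (g x) 2)%:E) in Ng *.
set M := fine (\esum_(x in [set: G]) (powR (h x) 2)%:E) in Nh *.
have N0 : 0 <= N by exact: esum_pow_ge0.
have M0 : 0 <= M by exact: esum_pow_ge0.
have mono (x y : R) : 0 <= x -> 0 <= y -> x <= y -> powR x 2^-1 <= powR y 2^-1.
  by move=> x0 y0 xy; apply: (ge0_ler_powR _) => //; rewrite ?invr_ge0 ?nnegrE.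
case: (leP N M) => NM.
  apply: le_trans Nh; rewrite ler_wpM2l //.
  rewrite -{2}(powR_sum1 2 2 M M0 pq2).
  by apply: ler_wpM2r; [exact: powR_ge0 | exact: (mono N M N0 M0 NM)].
apply: le_trans Ng; rewrite ler_wpM2l //.
rewrite -{2}(powR_sum1 2 2 N N0 pq2).
by apply: ler_wpM2l; [exact: powR_ge0 | exact: (mono M N M0 N0 (ltW NM))].
Qed.


Definition sumfs (X Y : {fset G}) : {fset G} := [fset (x + y)%R | x in X, y in Y]%fset.

Lemma mem_sumfs X Y z :
  reflect (exists x y, [/\ x \in X, y \in Y & z = x + y]) (z \in sumfs X Y).
Proof.
apply: (iffP idP) => [/imfset2P [x xX [y yY ->]]|[x [y [xX yY ->]]]]; first by exists x, y.
by apply/imfset2P; exists x => //; exists y.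
Qed.

Lemma maxconv_indic (X Y : {fset G}) :
  maxconv (indic R X) (indic R Y) = indic R (sumfs X Y).
Proof.
apply/funext => z.
have ub s : indic R X s * indic R Y (z - s) <= 1.
  by rewrite /indic; case: ifP; case: ifP; rewrite ?mulr1 ?mul0r ?mulr0.
have ge0 := maxconv_ge 0 ub.
rewrite {3}/indic; case: ifP => zin.
  apply/eqP; rewrite eq_le (maxconv_le ub) /=.
  move: zin => /mem_sumfs [x [y [xX yY ez]]].
  have e : z - x = y by rewrite ez addrC addKr.
  have := maxconv_ge x ub; rewrite e /indic xX yY mulr1; exact.
apply/eqP; rewrite eq_le; apply/andP; split; last first.
  by apply: le_trans ge0; rewrite mulr_ge0 ?indic_ge0.
apply: maxconv_le => s; rewrite /indic; case: ifP => sX; case: ifP => sY;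
  rewrite ?mulr0 ?mul0r //.
by move/negbT: zin => /negP; case; apply/mem_sumfs; exists s, (z - s); rewrite addrCA subrr addr0.
Qed.

Lemma sumfs_sumset3 (A B : {fset G}) : sumfs (sumfs U A) B = sumset3 A B U.
Proof.
apply/fsetP => z; apply/idP/idP.
  move=> /mem_sumfs [y [b [/mem_sumfs [u [a [uU aA ->]]] bB ->]]].
  by apply/mem_sumset3; exists a, b, u; split => //; rewrite [RHS]addrC addrA.
move=> /mem_sumset3 [a [b [u [aA bB uU ->]]]].
apply/mem_sumfs; exists (u + a), b; split => //; last by rewrite [LHS]addrC addrA.
by apply/mem_sumfs; exists u, a.
Qed.

Lemma l1norm_indic (Y : {fset G}) : l1norm (indic R Y) = (#|` Y|%:R)%:E.
Proof.
apply/eqP; rewrite eq_le; apply/andP; split.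
  apply: esum_le_fset => X.
  apply: le_trans; first exact: (sum_sub_le _ _ _ (fsubsetUl X Y) (indic_ge0 Y)).
  by rewrite /indic (sum_indic 1 (fsubsetUr X Y)).
have := esum_ge_fset (indic R Y) Y.
by rewrite /indic (sum_indic 1 (fsubset_refl Y)).
Qed.

Lemma lpnorm_indic (p : R) (Y : {fset G}) : 0 < p ->
  lpnorm p (indic R Y) = powR (#|` Y|%:R) p^-1.
Proof.
move=> p0; rewrite /lpnorm.
rewrite (eq_esum (b := fun x => (indic R Y x)%:E)); last first.
  by move=> x _; rewrite /indic; case: ifP => _; rewrite ?powR1 ?powR0 // gt_eqF.
by have := l1norm_indic Y; rewrite /l1norm => ->.
Qed.

Lemma adm_indic (A : {fset G}) : A != fset0 -> admissible (indic R A).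
Proof.
move=> /fset0Pn [x xA]; split; first exact: indic_ge0.
split; first by exists x; rewrite /indic xA oner_neq0.
by have := l1norm_indic A; rewrite /l1norm => ->; exact: ltry.
Qed.

Lemma F_indic (A B : {fset G}) :
  l1norm (maxconv (maxconv (indic R U) (indic R A)) (indic R B)) =
  (#|` sumset3 A B U|%:R)%:E.
Proof. by rewrite !maxconv_indic l1norm_indic sumfs_sumset3. Qed.

Lemma upper_p (p : R) : 1 < p -> (gamma_p p (indic R U) <= beta_p p U)%E.
Proof.
move=> p1.
have p0 : 0 < p by apply: lt_trans p1.
set q := p / (p - 1).
have pm1 : 0 < p - 1 by rewrite subr_gt0.
have q0 : 0 < q by rewrite divr_gt0.
have qinv : q^-1 = 1 - p^-1 by rewrite /q invf_div; field; rewrite gt_eqF.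
rewrite /gamma_p /=; apply: le_ereal_inf_tmp => _ [A [B [nA [nB ->]]]].
apply: ereal_inf_lbound; exists (indic R A), (indic R B).
split; first exact: adm_indic.
split; first exact: adm_indic.
by rewrite F_indic !lpnorm_indic // -EFinM -/q qinv.
Qed.

Lemma upper_gg : (gamma'' (indic R U) <= beta'' R U)%E.
Proof.
rewrite /gamma''; apply: le_ereal_inf_tmp => _ [A [nA ->]].
apply: ereal_inf_lbound; exists (indic R A).
split; first exact: adm_indic.
rewrite F_indic lpnorm_indic // -EFinM expr2 powR_sum1 ?pq2 //.
Qed.

Lemma ident_indic (A B : {fset G}) : #|` A| = #|` B| -> ident_distr (indic R A) (indic R B).
Proof.
move=> eAB t t0.
case: (leP t 1) => t1.
  have E (Y : {fset G}) : [set x | t <= indic R Y x] = [set` Y].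
    apply/seteqP; split => x /=.
      rewrite /indic; case: ifP => // _ H.
      by move: (lt_le_trans t0 H); rewrite ltxx.
    by move=> xY; rewrite /indic xY.
  rewrite !E.
  have HA : ([set` A] #= `I_#|` A|)%card by apply/card_eq_fsetP.
  have HB : ([set` B] #= `I_#|` A|)%card by apply/card_eq_fsetP.
  exact: card_eq_trans HA (card_esym HB).
have E (Y : {fset G}) : [set x | t <= indic R Y x] = set0.
  apply/seteqP; split => x //= H.
  by move: (le_trans H (indic_le1 Y x)); rewrite leNgt t1.
by rewrite !E; exact: card_eq00.
Qed.

Lemma upper_gh : (gamma' (indic R U) <= beta' R U)%E.
Proof.
rewrite /gamma'; apply: le_ereal_inf_tmp => _ [A [B [nA [nB [eAB ->]]]]].
apply: ereal_inf_lbound; exists (indic R A), (indic R B).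
split; first exact: adm_indic.
split; first exact: adm_indic.
split; first exact: ident_indic.
by rewrite F_indic !lpnorm_indic // -EFinM -powRM // powR12_sqrt // mulr_ge0.
Qed.

End Core.

Theorem mainTheorem9 (R : realType) (G : zmodType) (U : {fset G}) (p : R) :
  1 < p ->
  beta_p p U = gamma_p p (indic R U) /\
  beta' R U = gamma' (indic R U) /\
  beta'' R U = gamma'' (indic R U).
Proof.
move=> p1; split; [|split]; apply/eqP; rewrite eq_le; apply/andP; split.
- exact: lower_p.
- exact: upper_p.
- exact: lower_gh.
- exact: upper_gh.
- exact: lower_gg.
- exact: upper_gg.
Qed.
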